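(* Let $f\colon \mathbb{N}\to\mathbb{N}$ be a function, let $P\subseteq \Sigma^*\times\mathbb{N}$ be a parameterized problem that is $\ell$-General-Problem-hard$(f)$ for some integer $\ell$, and let $Q\subseteq\Sigma^*$ be the unparameterized problem associated with $P$. If there is an algorithm solving each instance $(x,k)$ of $P$ in $g(k)\cdot f(|x|)$ time (for some function $g$), then there is an algorithm solving each instance $x'$ of $Q$ in $O(f(|x'|))$ time.
   Context: A parameterized problem is a language $P\subseteq\Sigma^*\times\mathbb{N}$ over a finite alphabet $\Sigma$; for an instance $(x,k)$, $k$ is the parameter. The unparameterized problem associated with $P$ is $Q=\{x\in\Sigma^*\mid \exists k\colon (x,k)\in P\}$. For a polynomial function $f\colon\mathbb{N}\to\mathbb{N}$ and an integer $\ell$, $P$ is called $\ell$-General-Problem-hard$(f)$ if there is an algorithm $\mathcal{A}$ transforming any instance $x$ of $Q$ into an instance $(x',k')$ of $P$ such that (G1) $\mathcal{A}$ runs in $O(f(|x|))$ time, (G2) $x\in Q \iff (x',k')\in P$, (G3) $k'\le \ell$, and (G4) $|x'|\in O(|x|)$. *)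

(* Defs.v *)
(* A concrete machine model (deterministic single-tape Turing
   machines with a one-way infinite tape and a left-end sensor) is used to give
   meaning to "algorithm" and "running time". *)
From HB Require Import structures.
From mathcomp Require Import all_boot all_order all_algebra.
Set Implicit Arguments. Unset Strict Implicit. Unset Printing Implicit Defensive.
Import GRing.Theory Num.Theory.

Inductive move := MLeft | MStay | MRight.

(* A Turing machine with input alphabet In.  delta receives the current state,
   the scanned symbol and whether the head is on the leftmost cell. *)
Record TM (In : finType) := {
  tm_state : finType;
  tm_sym : finType;
  tm_blank : tm_sym;
  tm_in : In -> tm_sym;
  tm_in_inj : injective tm_in;
  tm_in_blank : forall a, tm_in a != tm_blank;
  tm_start : tm_state;
  tm_halt : pred tm_state;
  tm_accept : pred tm_state;
  tm_delta : tm_state -> tm_sym -> bool -> tm_state * tm_sym * move }.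

Record config (In : finType) (M : TM In) := Config {
  cf_state : tm_state M;
  cf_tape : nat -> tm_sym M;
  cf_head : nat }.

Definition step (In : finType) (M : TM In) (c : config M) : config M :=
  if @tm_halt _ M (cf_state c) then c else
  let h := cf_head c in
  let: (q', s', d) := @tm_delta _ M (cf_state c) (cf_tape c h) (h == 0) in
  Config q' (fun i => if i == h then s' else cf_tape c i)
         (match d with MLeft => h.-1 | MStay => h | MRight => h.+1 end).

Definition tape_of (A G : Type) (blank : G) (emb : A -> G) (w : seq A) : nat -> G :=
  fun i => nth blank (map emb w) i.

Definition init (In : finType) (M : TM In) (x : seq In) : config M :=
  Config (tm_start M) (tape_of (tm_blank M) (@tm_in _ M) x) 0.

Definition run (In : finType) (M : TM In) (x : seq In) (t : nat) : config M :=
  iter t (@step _ M) (init M x).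

Definition halts_within (In : finType) (M : TM In) (x : seq In) (t : nat) : bool :=
  @tm_halt _ M (cf_state (run M x t)).

Definition decides_within (In : finType) (M : TM In) (L : seq In -> Prop)
    (T : seq In -> nat) : Prop :=
  forall x, halts_within M x (T x) /\
            (@tm_accept _ M (cf_state (run M x (T x))) <-> L x).

(* Transducers: machines with an output alphabet; the output is the tape
   content at halting, which must be exactly the output word followed by blanks *)
Record TMT (In Out : finType) := {
  tmt :> TM In;
  tmt_out : Out -> tm_sym tmt;
  tmt_out_inj : injective tmt_out;
  tmt_out_blank : forall a, tmt_out a != tm_blank tmt }.

Definition computes_within (In Out : finType) (M : TMT In Out)
    (F : seq In -> seq Out) (T : seq In -> nat) : Prop :=
  forall x, halts_within M x (T x) /\
            cf_tape (run M x (T x)) =1 tape_of (tm_blank M) (@tmt_out _ _ M) (F x).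

(* Encoding of a parameterized instance (x, k) over alphabet option S:
   x followed by k copies of the fresh symbol None (k in unary). *)
Definition encode (S : Type) (x : seq S) (k : nat) : seq (option S) :=
  map Some x ++ nseq k None.

Definition bigO (T f : nat -> nat) : Prop :=
  exists c n0, forall n, n0 <= n -> T n <= c * f n.

Definition poly_fun (f : nat -> nat) : Prop :=
  exists p : {poly rat}, forall n, ((f n)%:R = p.[n%:R])%R.

Definition unparam (S : Type) (P : seq S -> nat -> Prop) : seq S -> Prop :=
  fun x => exists k, P x k.

Definition GP_hard (S : finType) (l : int) (f : nat -> nat)
    (P : seq S -> nat -> Prop) : Prop :=
  poly_fun f /\
  exists (A : TMT S (option S)) (xf : seq S -> seq S) (kf : seq S -> nat)
         (T : nat -> nat),
    bigO T f /\
    computes_within A (fun x => encode (xf x) (kf x)) (fun x => T (size x)) /\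
    (forall x, unparam P x <-> P (xf x) (kf x)) /\
    (forall x, ((kf x)%:Z <= l)%R) /\
    (exists c n0, forall x, n0 <= size x -> size (xf x) <= c * size x).

(* Main.v *)
Require Import Defs.
From mathcomp Require Import all_boot all_order all_algebra.
From mathcomp Require Import zify ring lra.

Section PolyStuff.
Import Order.TTheory GRing.Theory Num.Theory.
Local Open Scope ring_scope.

Lemma poly_bounds (p : {poly rat}) : p != 0%R -> exists (a : rat) (d N0 : nat),
  a != 0%R /\ (1 <= N0)%N /\
  (forall x : rat, (N0%:R <= x)%R -> (`|p.[x] - a * x ^+ d| <= `|a| / 2 * x ^+ d)%R).
Proof.
move=> pn0.
have : (0 < size p)%N by rewrite size_poly_gt0.
case Hs: (size p) => [//|d] _.
pose R : rat := (\sum_(i < d) `|p`_i|)%R.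
pose a := lead_coef p.
have an0 : a != 0%R by rewrite /a lead_coef_eq0.
have Hapos : (0 < `|a|)%R by rewrite normr_gt0.
exists a, d, (Num.Def.archi_bound (2 * R / `|a|)).+1.
split => //; split => // x Hx.
have R0 : (0 <= R)%R by rewrite /R; apply: sumr_ge0 => i _; exact: normr_ge0.
have HB := archi_boundP (x := 2 * R / `|a|) (divr_ge0 (mulr_ge0 (ler0n _ 2) R0) (ltW Hapos)).
have Hx1 : (1 <= x)%R.
  apply: le_trans Hx; by rewrite ler1n.
have Hx2 : (2 * R / `|a| < x)%R.
  apply: lt_le_trans HB (le_trans _ Hx); by rewrite ler_nat.
have Hx0 : (0 < x)%R by lra.
rewrite horner_coef Hs big_ord_recr /=.
have -> : p`_d = a by rewrite /a /lead_coef Hs.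
rewrite addrK.
set r := (\sum_(i < d) p`_i * x ^+ i)%R.
have H1 : (x * `|r| <= R * x ^+ d)%R.
  rewrite mulrC -{1}(ger0_norm (ltW Hx0)) -normrM /r mulr_suml.
  apply: le_trans (ler_norm_sum _ _ _) _.
  rewrite /R mulr_suml.
  apply: ler_sum => i _.
  rewrite normrM normrM (ger0_norm (exprn_ge0 _ (ltW Hx0))) (ger0_norm (ltW Hx0)) -mulrA -exprSr.
  apply: ler_wpM2l; first exact: normr_ge0.
  apply: ler_weXn2l => //; exact: ltn_ord.
have HX : (0 <= x ^+ d)%R by apply: exprn_ge0; lra.
have H2 : (2 * R <= `|a| * x)%R.
  have E : 2 * R = (2 * R / `|a|) * `|a| by rewrite divfK // normr_eq0.
  rewrite E; set q := 2 * R / `|a| in Hx2 *; nra.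
set X := x ^+ d in H1 HX *.
set n := `|r|%R in H1 *.
set aa := `|a|%R in H2 Hapos *.
nra.
Qed.

Lemma growth (f : nat -> nat) : poly_fun f -> (forall n, f n = 0%N) \/
  (forall c, exists C N, forall n m, (N <= n)%N -> (m <= c * n)%N ->
      (f m <= C * f n)%N /\ (0 < f n)%N).
Proof.
case=> p Hp.
case: (eqVneq p 0) Hp => [->|pn0] Hp.
  left => n; apply/eqP; have := Hp n; rewrite horner0 => /eqP; by rewrite pnatr_eq0.
right => c.
have [a [d [N0 [an0 [N01 Hb]]]]] := poly_bounds _ pn0.
have Hb' : forall n, (N0 <= n)%N ->
   a * n%:R ^+ d - `|a| / 2 * n%:R ^+ d <= (f n)%:R /\
   (f n)%:R <= a * n%:R ^+ d + `|a| / 2 * n%:R ^+ d.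
  move=> n Hn; have := Hb n%:R; rewrite ler_nat => /(_ Hn).
  rewrite -Hp; set X := n%:R ^+ d; set F := (f n)%:R.
  move=> H; move: H; rewrite ler_norml; case/andP => H1 H2; split; lra.
have Xpos : forall n, (1 <= n)%N -> 0 < n%:R ^+ d :> rat.
  move=> n Hn; apply: exprn_gt0; by rewrite ltr0n.
have apos : 0 < a.
  have [H1 H2] := Hb' N0 (leqnn _).
  have := Xpos N0 N01; set X := N0%:R ^+ d; set F := ((f N0)%:R : rat) => HX.
  have F0 : 0 <= F by rewrite /F ler0n.
  rewrite lt_neqAle eq_sym an0 /=.
  case: (lerP 0 a) => // Ha.
  rewrite ltr0_norm // in H2. rewrite -/X -/F in H2; exfalso; nra.
have Hb2 : forall n, (N0 <= n)%N ->
   a / 2 * n%:R ^+ d <= (f n)%:R /\ (f n)%:R <= 3 * a / 2 * n%:R ^+ d.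
  move=> n Hn; have [H1 H2] := Hb' n Hn; rewrite gtr0_norm // in H1 H2.
  split; lra.
pose K := (\max_(i < N0) f i)%N.
exists (3 * c ^ d + K)%N, N0 => n m Hn Hm.
have fpos : (0 < f n)%N.
  have [H1 _] := Hb2 n Hn; have := Xpos n (leq_trans N01 Hn).
  rewrite -(ltr0n rat); set X := n%:R ^+ d => HX; rewrite -/X in H1; nra.
split => //.
case: (ltnP m N0) => HmN.
  have : (f m <= K)%N by apply: (leq_bigmax (Ordinal HmN)).
  nia.
have [_ H2] := Hb2 m HmN.
have [H1 _] := Hb2 n Hn.
have Hmn : m%:R ^+ d <= (c%:R * n%:R) ^+ d :> rat.
  apply: lerXn2r; rewrite ?nnegrE ?ler0n ?mulr_ge0 //.
  by rewrite -natrM ler_nat.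
have : (f m)%:R <= (3 * c ^ d)%:R * (f n)%:R :> rat.
  apply: (le_trans H2).
  rewrite natrM natrX; rewrite exprMn in Hmn.
  have HX : 0 <= n%:R ^+ d :> rat by apply: exprn_ge0; rewrite ler0n.
  have HC : 0 <= c%:R ^+ d :> rat by apply: exprn_ge0; rewrite ler0n.
  set X := n%:R ^+ d in H1 HX Hmn *; set Y := m%:R ^+ d in H2 Hmn *.
  set Cd := c%:R ^+ d in HC Hmn *; set F := ((f n)%:R : rat) in H1 *.
  nra.
rewrite -natrM ler_nat; nia.
Qed.

End PolyStuff.

Set Implicit Arguments. Unset Strict Implicit. Unset Printing Implicit Defensive.

Lemma iter_halt (In : finType) (M : TM In) (c : config M) n :
  @tm_halt _ M (cf_state c) -> iter n (@step _ M) c = c.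
Proof. by move=> H; elim: n => //= n ->; rewrite /step H. Qed.

Lemma run_after (In : finType) (M : TM In) x t t' :
  halts_within M x t -> t <= t' -> run M x t' = run M x t.
Proof.
move=> H Ht; rewrite /run -(subnK Ht) iterD; exact: iter_halt.
Qed.

Lemma head_step (In : finType) (M : TM In) (c : config M) :
  cf_head (step c) <= (cf_head c).+1.
Proof.
rewrite /step; case: (tm_halt _) => //=.
case: (tm_delta _ _ _) => [[q s] d] /=; case: d => /=; lia.
Qed.

Lemma head_run (In : finType) (M : TM In) x t : cf_head (run M x t) <= t.
Proof.
elim: t => [|t IH] //=; apply: leq_trans (head_step _) _; by [].
Qed.

Lemma tape_of_map (A G G' : Type) (b : G) (e : A -> G) (b' : G') (e' : A -> G')
   (h : G -> G') w i :
  h b = b' -> (forall a, h (e a) = e' a) -> tape_of b' e' w i = h (tape_of b e w i).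
Proof.
move=> Hb He; rewrite /tape_of; elim: w i => [|a w IH] [|i] //=.
Qed.

Definition trB (S : finType) (A : TMT S (option S)) (B : TM (option S))
  (s : tm_sym A) : tm_sym B :=
  if [pick a | @tmt_out _ _ A a == s] is Some a then @tm_in _ B a else tm_blank B.

Lemma trB_out (S : finType) (A : TMT S (option S)) (B : TM (option S)) a : @trB S A B (@tmt_out _ _ A a) = @tm_in _ B a.
Proof.
rewrite /trB; case: pickP => [a' /eqP H|/(_ a)]; last by rewrite eqxx.
by rewrite (tmt_out_inj H).
Qed.

Lemma trB_blank (S : finType) (A : TMT S (option S)) (B : TM (option S)) : @trB S A B (tm_blank A) = tm_blank B.
Proof.
rewrite /trB; case: pickP => [a' H|//]; by move: (@tmt_out_blank _ _ A a'); rewrite H.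
Qed.

Definition symM S (A : TMT S (option S)) (B : TM (option S)) : finType :=
  (tm_sym A + tm_sym B)%type.
Definition stM S (A : TMT S (option S)) (B : TM (option S)) : finType :=
  (tm_state A + tm_state B)%type.

Definition unA (S : finType) (A : TMT S (option S)) (B : TM (option S)) (u : symM A B) : tm_sym (tmt A) :=
  match u with inl s => s | inr _ => tm_blank A end.
Definition trM (S : finType) (A : TMT S (option S)) (B : TM (option S)) (u : symM A B) : tm_sym B :=
  match u with inl s => trB B s | inr s => s end.

Definition deltaM (S : finType) (A : TMT S (option S)) (B : TM (option S)) (q : stM A B) (u : symM A B) (z : bool) :
    stM A B * symM A B * move :=
  match q with
  | inl qa => if @tm_halt _ A qa then
                (if z then (inr (tm_start B), u, MStay) else (inl qa, u, MLeft))
              else let: (q', s', d) := @tm_delta _ A qa (unA u) z in (inl q', inl s', d)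
  | inr qb => let: (q', s', d) := @tm_delta _ B qb (trM u) z in (inr q', inr s', d)
  end.

Definition haltM (S : finType) (A : TMT S (option S)) (B : TM (option S)) (q : stM A B) : bool :=
  match q with inl _ => false | inr qb => @tm_halt _ B qb end.
Definition accM (S : finType) (A : TMT S (option S)) (B : TM (option S)) (q : stM A B) : bool :=
  match q with inl _ => false | inr qb => @tm_accept _ B qb end.

Lemma inM_inj S (A : TMT S (option S)) (B : TM (option S)) :
  injective (fun a : S => (inl (@tm_in _ A a) : symM A B)).
Proof. by move=> a b [] /tm_in_inj. Qed.

Lemma inM_blank S (A : TMT S (option S)) (B : TM (option S)) a :
  (inl (@tm_in _ A a) : symM A B) != inl (tm_blank A).
Proof. by rewrite inj_eq; [exact: tm_in_blank | move=> ? ? []]. Qed.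

Definition compM S (A : TMT S (option S)) (B : TM (option S)) : TM S :=
  {| tm_state := stM A B; tm_sym := symM A B; tm_blank := inl (tm_blank A);
     tm_in := fun a => inl (@tm_in _ A a); tm_in_inj := @inM_inj S A B;
     tm_in_blank := @inM_blank S A B;
     tm_start := inl (tm_start A); tm_halt := @haltM S A B;
     tm_accept := @accM S A B; tm_delta := @deltaM S A B |}.

Section Sim.
Variables (S : finType) (A : TMT S (option S)) (B : TM (option S)).
Let M := compM A B.

Definition RA (cM : config M) (cA : config (tmt A)) : Prop :=
  cf_state cM = inl (cf_state cA) /\ cf_head cM = cf_head cA /\
  forall i, cf_tape cM i = inl (cf_tape cA i).

Lemma stepA cM cA : RA cM cA -> ~~ @tm_halt _ A (cf_state cA) ->
  RA (step cM) (step cA).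
Proof.
case: cM => qM tM hM; case: cA => qA tA hA; rewrite /RA /= => -[-> [-> Ht]] /negbTE Hh.
rewrite /step /= Hh /= Ht /=.
case: (tm_delta _ _ _) => [[q' s'] d] /=.
split => //; split => // i; by case: eqP.
Qed.

Lemma runA x t : (forall t', t' < t -> ~~ halts_within A x t') ->
  RA (run M x t) (run A x t).
Proof.
elim: t => [|t IH] H.
  split => //; split => // i /=.
  exact: (@tape_of_map _ _ _ (tm_blank A) (@tm_in _ A) _ _ inl).
have IH' := IH (fun t' Ht' => H t' (ltnW Ht')).
exact: stepA IH' (H t (ltnSn t)).
Qed.

Lemma ret k (cM : config M) q tau h :
  @tm_halt _ A q -> cf_state cM = inl q -> cf_head cM = h -> cf_tape cM =1 tau ->
  k <= h ->
  cf_state (iter k (@step _ M) cM) = inl q /\ cf_head (iter k (@step _ M) cM) = h - k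
  /\ cf_tape (iter k (@step _ M) cM) =1 tau.
Proof.
move=> Hq Hs Hh Ht; elim: k => [|k IH] Hk.
  by rewrite subn0.
have [Hs' [Hh' Ht']] := IH (ltnW Hk).
rewrite /= /step.
move: Hs' Hh' Ht'; case: (iter k _ cM) => qc tc hc /= -> -> Ht'.
rewrite /= Hq.
have -> : (h - k == 0) = false by apply/negbTE; rewrite -lt0n subn_gt0.
split => //; split; first by rewrite subnS.
by move=> i /=; case Hi: (i == h - k); [move/eqP: Hi => ->|]; rewrite Ht'.
Qed.

Lemma ret0 (cM : config M) q tau :
  @tm_halt _ A q -> cf_state cM = inl q -> cf_head cM = 0 -> cf_tape cM =1 tau ->
  cf_state (step cM) = inr (tm_start B) /\ cf_head (step cM) = 0
  /\ cf_tape (step cM) =1 tau.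
Proof.
case: cM => qc tc hc /= Hq -> -> Ht; rewrite /step /= Hq /=.
by split => //; split => // i /=; case Hi: (i == 0); [move/eqP: Hi => ->|]; rewrite Ht.
Qed.

Definition RB (cM : config M) (cB : config B) : Prop :=
  cf_state cM = inr (cf_state cB) /\ cf_head cM = cf_head cB /\
  forall i, trM (cf_tape cM i) = cf_tape cB i.

Lemma stepB cM cB : RB cM cB -> RB (step cM) (step cB).
Proof.
case: cM => qM tM hM; case: cB => qB tB hB; rewrite /RB /= => -[-> [-> Ht]].
rewrite /step /=.
case Hh: (tm_halt _) => //=.
rewrite Ht.
case: (tm_delta _ _ _) => [[q' s'] d] /=.
split => //; split => // i; case: eqP => //.
Qed.

Lemma iterB k cM cB : RB cM cB -> RB (iter k (@step _ M) cM) (iter k (@step _ B) cB).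
Proof. by move=> H; elim: k => //= k IH; apply: stepB. Qed.

End Sim.

Definition M0 (S : finType) (b : bool) : TM S :=
  {| tm_state := unit; tm_sym := option S; tm_blank := None;
     tm_in := @Some S; tm_in_inj := @Some_inj _; tm_in_blank := fun a => isT;
     tm_start := tt; tm_halt := fun _ => true; tm_accept := fun _ => b;
     tm_delta := fun q s z => (q, s, MStay) |}.

Theorem lemma1 (S : finType) (f : nat -> nat) (P : seq S -> nat -> Prop) (l : int) :
  GP_hard l f P ->
  (exists (B : TM (option S)) (g : nat -> nat),
     forall x k,
       halts_within B (encode x k) (g k * f (size x)) /\
       (@tm_accept _ B (cf_state (run B (encode x k) (g k * f (size x)))) <-> P x k)) ->
  exists (M : TM S) (T : nat -> nat),
    bigO T f /\ decides_within M (unparam P) (fun x => T (size x)).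
Proof.
move=> [Hpoly [A [xf [kf [TA [HTA [HA [HG2 [HG3 HG4]]]]]]]]] [B [g HB]].
have [f0|Hgr] := growth _ Hpoly.
  exists (M0 S (@tm_accept _ B (tm_start B))), (fun _ => 0).
  split; first by exists 0, 0.
  move=> x; split => //=.
  split.
    move=> Hacc; exists 0; have [_ <-] := HB x 0; by rewrite f0 muln0.
  by case=> k; have [_ <-] := HB x k; rewrite f0 muln0.
pose L := `|l|%N.
have HL : forall x, kf x < L.+1.
  move=> x; have := HG3 x; rewrite /L; lia.
pose G := \max_(k < L.+1) g k.
pose T n := TA n + TA n + 1 + G * \max_(t : n.-tuple S) f (size (xf t)).
exists (compM A B), T.
split.
  case: HTA => cA [nA HA']; case: HG4 => c [n0 Hc]; have [C [N Hgr']] := Hgr c.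
  exists (cA + cA + 1 + G * C), (nA + n0 + N) => n Hn.
  have h1 := HA' n (leq_trans (leq_addr _ _) (leq_trans (leq_addr _ _) Hn)).
  have h3 : 0 < f n by have [] := Hgr' n 0 (leq_trans (leq_addl _ _) Hn) (leq0n _).
  have h2 : \max_(t : n.-tuple S) f (size (xf t)) <= C * f n.
    apply/bigmax_leqP => t _.
    have Hs : n0 <= size t by rewrite size_tuple; lia.
    have := Hc t Hs; rewrite size_tuple => Hs'.
    by have [] := Hgr' n (size (xf t)) (leq_trans (leq_addl _ _) Hn) Hs'.
  have h4 := leq_mul (leqnn G) h2.
  rewrite /T; nia.
move=> x.
have [HhA HtA] := HA x.
have [t0 Ht0 Hmin] := ex_minnP (ex_intro (fun t => halts_within A x t) _ HhA).
have HrA := runA B (t := t0) (x := x) (fun t' Ht' => introT negP (fun H => (negP (negbT (leq_gtF (Hmin t' H))) Ht'))).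
have Hle0 : t0 <= TA (size x) := Hmin _ HhA.
have Hrun := run_after Ht0 Hle0.
set w := encode (xf x) (kf x).
have [HhB HaccB] := HB (xf x) (kf x).
set tB := g (kf x) * f (size (xf x)) in HhB HaccB.
set cA := run A x t0 in HrA Hrun.
set h0 := cf_head cA.
have Hh0 : h0 <= t0 by apply: head_run.
case: HrA => Hs1 [Hh1 Ht1].
have [Hs2 [Hh2 Ht2]] := ret (k := h0) Ht0 Hs1 Hh1 Ht1 (leqnn _).
rewrite subnn in Hh2.
have [Hs3 [Hh3 Ht3]] := ret0 Ht0 Hs2 Hh2 Ht2.
set c1 := step _ in Hs3 Hh3 Ht3.
have HR : RB c1 (init B w).
  split => //; split => // i.
  rewrite Ht3 /= -Hrun.
  have := HtA i => /= ->.
  symmetry; apply: (@tape_of_map _ _ _ (tm_blank A) (@tmt_out _ _ A) _ _ (trB B)).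
    exact: trB_blank.
  exact: trB_out.
have [Hs4 _] := iterB tB HR.
have Ett : run (compM A B) x (tB + (1 + (h0 + t0))) = iter tB (@step _ (compM A B)) c1.
  by rewrite /run !iterD.
have Hhalt : halts_within (compM A B) x (tB + (1 + (h0 + t0))).
  by rewrite /halts_within Ett Hs4.
have Hlt : tB + (1 + (h0 + t0)) <= T (size x).
  rewrite /T.
  have : tB <= G * \max_(t : (size x).-tuple S) f (size (xf t)).
    apply: leq_mul.
      exact: (leq_bigmax (Ordinal (HL x))).
    exact: (leq_bigmax (in_tuple x)).
  lia.
have := run_after Hhalt Hlt => Efin.
rewrite /halts_within Efin; split => //.
rewrite Ett Hs4 /= HG2; exact: HaccB.
Qed.
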